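(* Let $R$ be an integral domain and let $A$ be an evolution algebra over $R$ with finite basis $x_1,\dots,x_N$ and structure coefficient matrix $C=(c_{ki})_{N\times N}$. Then $A$ is nilpotent if and only if there is a reordering (permutation) of the basis elements $x_1,\dots,x_N$ such that, with respect to this ordering, $C$ is strictly upper triangular (i.e. $c_{ki}=0$ whenever $k\ge i$ in the new ordering).
   Context: An evolution algebra over a commutative ring $R$ is a free $R$-module $A$ with basis $\{x_i\}$ equipped with the $R$-bilinear multiplication determined by $x_ix_j=0$ for $i\ne j$ and $x_i^2=\sum_k c_{ki}x_k$ with $c_{ki}\in R$. The structure coefficient matrix $C$ has $(k,i)$ entry $c_{ki}$, so its $i$-th column consists of the coordinates of $x_i^2$. Powers: $A^1=A$, $A^n=A^{n-1}A$; $A$ is nilpotent if $A^n=(0)$ for some $n$. *)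

(* Defs.v *)
From HB Require Import structures.
From mathcomp Require Import all_boot all_order all_algebra all_fingroup.
Set Implicit Arguments. Unset Strict Implicit. Unset Printing Implicit Defensive.
Import Order.TTheory GRing.Theory Num.Theory.
Local Open Scope ring_scope.

(* The evolution algebra A = R^N with basis x_0..x_{N-1} (standard basis of
   column vectors) and structure matrix C, where column i of C holds the
   coordinates of x_i^2.  Product: (sum u_i x_i)(sum v_j x_j) = sum_i u_i v_i x_i^2. *)
Definition evo_mul (R : comRingType) (N : nat) (C : 'M[R]_N) (u v : 'cV[R]_N)
  : 'cV[R]_N := C *m (\col_i (u i 0 * v i 0)).

(* evo_pow C n v : v lies in A^n, where A^1 = A, A^(n+1) = A^n A
   (the R-submodule spanned by products a*b, a in A^n, b in A).
   Convention: A^0 := A. *)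
Inductive evo_pow (R : comRingType) (N : nat) (C : 'M[R]_N) : nat -> 'cV[R]_N -> Prop :=
| evo_pow_base n v : (n <= 1)%N -> evo_pow C n v
| evo_pow_mul n a b : evo_pow C n.+1 a -> evo_pow C n.+2 (evo_mul C a b)
| evo_pow_zero n : evo_pow C n 0
| evo_pow_add n u v : evo_pow C n u -> evo_pow C n v -> evo_pow C n (u + v)
| evo_pow_scale n (r : R) u : evo_pow C n u -> evo_pow C n (r *: u).

Definition evo_nilpotent (R : comRingType) (N : nat) (C : 'M[R]_N) : Prop :=
  exists n : nat, forall v, evo_pow C n v -> v = 0.

(* Main.v *)
Require Import Defs.
From HB Require Import structures.
From mathcomp Require Import all_boot all_order all_algebra all_fingroup.
From mathcomp Require Import zify.
Import Order.TTheory GRing.Theory Num.Theory.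
Local Open Scope ring_scope.

Set Implicit Arguments.
Section S.
Variables (R : idomainType) (N : nat) (C : 'M[R]_N).

Definition ev (k : 'I_N) : 'cV[R]_N := delta_mx k 0.

Lemma evo_mul_ev (u : 'cV[R]_N) k : evo_mul C u (ev k) = u k 0 *: (C *m ev k).
Proof.
rewrite /evo_mul scalemxAr; congr (C *m _).
apply/matrixP => i j; rewrite !mxE (ord1 j) /=.
by case: (eqVneq i k) => [->|_]; rewrite ?mulr1 ?mulr0.
Qed.

Lemma Cev k k' : (C *m ev k) k' 0 = C k' k.
Proof. by rewrite /ev -colE mxE. Qed.

Lemma Zev c k k' : (c *: (C *m ev k)) k' 0 = c * C k' k.
Proof. by rewrite mxE Cev. Qed.

Fixpoint walk (m : nat) (i : 'I_N) : bool :=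
  if m is m'.+1 then [exists k, (C k i != 0) && walk m' k] else true.

Lemma walk_nz m : forall k n c, walk m.+1 k -> c != 0 ->
  evo_pow C n.+2 (c *: (C *m ev k)) -> exists v, v != 0 /\ evo_pow C (n + m).+2 v.
Proof.
elim: m => [|m IH] k n c /= /existsP [k' /andP [Hk' Hw]] Hc Hp.
  exists (c *: (C *m ev k)); split; last by rewrite addn0.
  apply/eqP => /matrixP /(_ k' 0); rewrite Zev mxE => /eqP.
  by rewrite mulf_eq0 (negPf Hc) (negPf Hk').
have := IH k' n.+1 (c * C k' k) Hw.
rewrite mulf_eq0 (negPf Hc) (negPf Hk') addSnnS => H; apply: H => //.
have := evo_pow_mul (ev k') Hp.
by rewrite evo_mul_ev Zev.
Qed.

Lemma ev_nz k : ev k != 0.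
Proof.
apply/eqP => /matrixP /(_ k 0); rewrite !mxE eqxx /= => /eqP.
by rewrite oner_eq0.
Qed.

Lemma walk_dec m i : walk m.+1 i -> walk m i.
Proof.
elim: m i => [//|m IH] i /= /existsP [k /andP [Hk Hw]].
by apply/existsP; exists k; rewrite Hk IH.
Qed.

Lemma walk_edge m i k : C k i != 0 -> walk m k -> walk m.+1 i.
Proof. by move=> Hk Hw /=; apply/existsP; exists k; rewrite Hk. Qed.

End S.
Arguments walk {R N} C m i.
Arguments ev {R N} k.
Arguments walk_nz {R N C m k n c}.
Arguments ev_nz {R N} k.
Arguments walk_edge {R N C m i k}.
Unset Implicit Arguments.

Theorem theorem2p8 (R : idomainType) (N : nat) (C : 'M[R]_N) :
  evo_nilpotent C <->
  exists s : 'S_N, forall k i : 'I_N, (s i <= s k)%N -> C k i = 0.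
Proof.
split.
- move=> [n0 Hn0].
  set M := n0.-1.
  have Hw : forall k, ~~ walk C M k.
    move=> k; apply/negP; rewrite /M; case: n0 Hn0 {M} => [|[|m]] Hn0 /= Hwk.
    + have H0 : evo_pow C 0 (ev k) by apply: evo_pow_base.
      by move: (ev_nz (R:=R) k); rewrite (Hn0 _ H0) eqxx.
    + have H0 : evo_pow C 1 (ev k) by apply: evo_pow_base.
      by move: (ev_nz (R:=R) k); rewrite (Hn0 _ H0) eqxx.
    + have H1 : evo_pow C 1 (ev k) by apply: evo_pow_base.
      have H2 := evo_pow_mul (ev k) H1.
      rewrite evo_mul_ev /ev mxE eqxx /= -/(ev k) in H2.
      have [v [Hv Hp]] := walk_nz Hwk (oner_neq0 R) H2.
      by rewrite (Hn0 v Hp) eqxx in Hv.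
  pose f i := count (fun m => walk C m i) (iota 0 M.+1).
  have Hf : forall i k, C k i != 0 -> (f k < f i)%N.
    move=> i k Hki; rewrite /f.
    have E : forall j, count (fun m => walk C m j) (iota 0 M.+1)
       = (count (fun m => walk C m j) (iota 0 M) + walk C M j)%N.
      by move=> j; rewrite -addn1 iotaD count_cat /= addn0.
    rewrite [X in (X < _)%N]E (negbTE (Hw k)) /= addn0.
    rewrite add1n ltnS -[1%N]/(1 + 0)%N iotaDl count_map.
    apply: sub_count => m /= Hm.
    by apply: walk_edge Hki Hm.
  pose r := [rel a b : 'I_N | (f a <= f b)%N].
  pose srt := sort r (enum 'I_N).
  have Hsz : size srt = N by rewrite size_sort size_enum_ord.
  have Hin : forall i, i \in srt by move=> i; rewrite mem_sort mem_enum.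
  have Hidx : forall i, (index i srt < N)%N by move=> i; have := Hin i; rewrite -index_mem Hsz.
  pose g i := Ordinal (Hidx i).
  have ginj : injective g.
    move=> a b /(congr1 val) /= Hab.
    by rewrite -(nth_index a (Hin a)) Hab nth_index.
  exists (perm ginj) => k i; rewrite !permE /= => Hle.
  apply/eqP; apply: contraT => Hki.
  have Hfk := Hf _ _ Hki.
  move: Hle; rewrite leq_eqVlt => /orP [/eqP Heq|Hlt].
    have : i = k by apply: ginj; apply: val_inj.
    by move=> Eik; rewrite Eik ltnn in Hfk.
  have Hs : sorted r srt by apply: sort_sorted => a b; apply: leq_total.
  have Htr : transitive r by move=> a b c; apply: leq_trans.
  have := sorted_ltn_nth Htr i Hs; move=> /(_ (index i srt) (index k srt)).
  rewrite !inE Hsz !Hidx !nth_index // => /(_ isT isT Hlt) /=.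
  by rewrite leqNgt Hfk.
- move=> [s Hs]; exists N.+1.
  have P : forall n v, evo_pow C n v -> forall k, (N < s k + n)%N -> v k 0 = 0.
    move=> n v; elim => {n v}.
    + move=> n v Hn k Hk; have := ltn_ord (s k); lia.
    + move=> n a b Ha IH k Hk; rewrite /evo_mul mxE big1 // => i _.
      rewrite mxE.
      case: (leqP (s i) (s k)) => Hik; first by rewrite Hs // mul0r.
      by rewrite IH ?mul0r ?mulr0 //; lia.
    + by move=> n k _; rewrite mxE.
    + by move=> n u v _ IHu _ IHv k Hk; rewrite mxE IHu // IHv // addr0.
    + by move=> n c u _ IH k Hk; rewrite mxE IH // mulr0.
  move=> v Hv; apply/matrixP => k j; rewrite (ord1 j) mxE.
  by apply: (P _ _ Hv); lia.
Qed.
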